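(* Let $n \geq 3$. If $Z : \mathcal{T}_o^n \to \mathcal{K}_o^n$ is an $\mathrm{SL}(n)$ contravariant $L_\infty$ Minkowski valuation, then $ZT= \{o\}$ for every $T \in \mathcal{T}_o^n$ with $\dim T < n$.
   Context: $\mathcal{K}_o^n$ denotes the set of convex bodies (compact convex sets) in $\mathbb{R}^n$ containing the origin $o$, and $\mathcal{T}_o^n$ the set of simplices (of any dimension) in $\mathbb{R}^n$ having the origin as one of their vertices. For $K,L\in\mathcal{K}_o^n$, $K+_\infty L$ is the convex body with support function $\max\{h_K,h_L\}$ ($h$ denoting support functions), i.e. the convex hull of $K\cup L$. $Z$ is an $L_\infty$ Minkowski valuation on $\mathcal{T}_o^n$ if $Z(K\cup L)+_\infty Z(K\cap L)=ZK+_\infty ZL$ whenever $K,L,K\cup L,K\cap L\in\mathcal{T}_o^n$. $Z$ is $\mathrm{SL}(n)$ contravariant if $Z(\phi K)=\phi^{-t}ZK$ for all $K$ and all $\phi\in\mathrm{SL}(n)$. *)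

(* Defs.v *)
From mathcomp Require Import all_boot all_order all_algebra.
From mathcomp Require Import all_classical all_reals all_analysis.
Set Implicit Arguments. Unset Strict Implicit. Unset Printing Implicit Defensive.
Import Order.TTheory GRing.Theory Num.Theory.
Import numFieldNormedType.Exports.
Local Open Scope classical_set_scope.
Local Open Scope ring_scope.

Definition convex_set (R : realType) (n : nat) (C : set 'cV[R]_n) : Prop :=
  forall x y t, C x -> C y -> 0 <= t -> t <= 1 -> C ((1 - t) *: x + t *: y).

Definition conv_hull (R : realType) (n : nat) (A : set 'cV[R]_n) : set 'cV[R]_n :=
  [set x | forall C, convex_set C -> A `<=` C -> C x].

Definition convex_body_o (R : realType) (n : nat) (K : set 'cV[R]_n) : Prop :=
  compact K /\ convex_set K /\ K 0.

(* T_o^n : simplices (of any dimension k) with the origin as a vertex: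
   T = conv{0, v_1, ..., v_k} with v_1..v_k (columns of V) linearly independent *)
Definition simplex_o (R : realType) (n : nat) (T : set 'cV[R]_n) : Prop :=
  exists (k : nat) (V : 'M[R]_(n, k)),
    row_free V^T /\ T = conv_hull ([set 0] `|` [set col j V | j in setT]).

Definition linf_add (R : realType) (n : nat) (K L : set 'cV[R]_n) : set 'cV[R]_n :=
  conv_hull (K `|` L).

Definition affdim_ge (R : realType) (n : nat) (A : set 'cV[R]_n) (k : nat) : Prop :=
  exists (a0 : 'cV[R]_n) (V : 'M[R]_(n, k)),
    A a0 /\ (forall j, A (a0 + col j V)) /\ row_free V^T.

Definition lin_image (R : realType) (n : nat) (phi : 'M[R]_n) (K : set 'cV[R]_n) :=
  [set phi *m x | x in K].

Definition maps_To_Ko (R : realType) (n : nat) (Z : set 'cV[R]_n -> set 'cV[R]_n) :=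
  forall T, simplex_o T -> convex_body_o (Z T).

Definition Linf_valuation (R : realType) (n : nat) (Z : set 'cV[R]_n -> set 'cV[R]_n) :=
  forall K L, simplex_o K -> simplex_o L -> simplex_o (K `|` L) -> simplex_o (K `&` L) ->
    linf_add (Z (K `|` L)) (Z (K `&` L)) = linf_add (Z K) (Z L).

Definition SL_contravariant (R : realType) (n : nat) (Z : set 'cV[R]_n -> set 'cV[R]_n) :=
  forall K (phi : 'M[R]_n), simplex_o K -> \det phi = 1 ->
    Z (lin_image phi K) = lin_image (invmx phi)^T (Z K).

(* Main.v *)
Require Import Defs.
From mathcomp Require Import all_boot all_order all_algebra.
From mathcomp Require Import all_classical all_reals all_analysis.
From mathcomp Require Import ring lra.
Set Implicit Arguments. Unset Strict Implicit. Unset Printing Implicit Defensive.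
Import Order.TTheory GRing.Theory Num.Theory.
Import numFieldNormedType.Exports.
Local Open Scope classical_set_scope.
Local Open Scope ring_scope.
Definition Delta (R : realType) k : set 'cV[R]_k :=
  [set t | (forall i, 0 <= t i 0) /\ \sum_i t i 0 <= 1].
Definition simS (R : realType) n k (V : 'M[R]_(n,k)) : set 'cV[R]_n :=
  [set V *m t | t in @Delta R k].

Lemma sum_delta (R : realType) k (j : 'I_k) : \sum_i (delta_mx j 0 : 'cV[R]_k) i 0 = 1.
Proof.
rewrite (bigD1 j) //= big1 ?addr0; first by rewrite mxE !eqxx.
by move=> i /negbTE ij; rewrite mxE ij.
Qed.

Lemma Delta0 (R : realType) k : Delta (0 : 'cV[R]_k).
Proof. by split=> [i|]; rewrite ?mxE // big1 // => i _; rewrite mxE. Qed.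

Lemma conv_simS (R : realType) n k (V : 'M[R]_(n,k)) :
  conv_hull ([set 0] `|` [set col j V | j in setT]) = simS V.
Proof.
apply/seteqP; split.
- move=> x Hx; apply: Hx.
  + move=> _ _ s [t1 [p1 s1] <-] [t2 [p2 s2] <-] s0 s1'.
    exists ((1-s) *: t1 + s *: t2); last by rewrite mulmxDr !scalemxAr.
    split.
    * move=> i; rewrite !mxE; apply: addr_ge0; apply: mulr_ge0 => //.
      by rewrite subr_ge0.
    * under eq_bigr => i _ do rewrite !mxE.
      rewrite big_split /= -!mulr_sumr.
      apply: (le_trans (y := (1 - s) * 1 + s * 1)); last by rewrite !mulr1 subrK.
      apply: lerD; apply: ler_wpM2l => //; by rewrite subr_ge0.
  + move=> y [->|[j _ <-]].
    * by exists 0; [apply: Delta0 | rewrite mulmx0].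
    * exists (delta_mx j 0); last by rewrite colE.
      split; last by rewrite sum_delta.
      by move=> i; rewrite mxE ler0n.
- move=> _ [t Dt <-] C cC sub.
  suff H : forall r t, Delta t -> (forall j : 'I_k, (r <= j)%N -> t j 0 = 0) ->
     C (V *m t).
    by apply: (H k) => // j; rewrite leqNgt ltn_ord.
  clear Dt; elim=> [|r IH] {}t [t0 ts] supp.
  + have -> : t = 0 by apply/matrixP => i j; rewrite ord1 mxE supp.
    by rewrite mulmx0; apply: sub; left.
  case: (ltnP r k) => [rk|kr]; last first.
    apply: IH => // j rj; exfalso; move: (ltn_ord j); rewrite ltnNge.
    by rewrite (leq_trans kr rj).
  pose jr := Ordinal rk; pose a : R := t jr 0.
  pose t' := t - a *: delta_mx jr 0.
  have supp' : forall j : 'I_k, (r <= j)%N -> t' j 0 = 0.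
    move=> j rj; rewrite !mxE eqxx andbT.
    case: (eqVneq j jr) => [->|njr]; first by rewrite mulr1 subrr.
    rewrite mulr0 subr0 supp // ltn_neqAle rj andbT.
    by apply: contra njr => /eqP e; apply/eqP/val_inj.
  have t'0 : forall i, 0 <= t' i 0.
    move=> i; rewrite !mxE eqxx andbT.
    case: (eqVneq i jr) => [->|njr]; first by rewrite mulr1 subrr.
    by rewrite mulr0 subr0.
  have st' : \sum_i t' i 0 = \sum_i t i 0 - a.
    under eq_bigr => i _ do rewrite !mxE.
    rewrite sumrB -mulr_sumr.
    congr (_ - _); rewrite -[RHS]mulr1; congr (_ * _).
    by rewrite -[RHS](sum_delta R jr); apply: eq_bigr => i _; rewrite mxE.
  have a0 : 0 <= a by apply: t0.
  have a1 : a <= 1.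
    apply: le_trans ts; rewrite (bigD1 jr) //= lerDl.
    by apply: sumr_ge0.
  have eqV : V *m t = V *m t' + a *: col jr V.
    by rewrite colE scalemxAr -mulmxDr subrK.
  case: (eqVneq a 1) => [ae|an1].
  + have t'z : t' = 0.
      have s0 : \sum_i t' i 0 = 0.
        apply/eqP; rewrite eq_le sumr_ge0 // andbT st' ae subr_le0 //.
      apply/matrixP => i j; rewrite ord1 [RHS]mxE.
      by apply: (psumr_eq0P (P := xpredT) (F := fun i => t' i 0) _ s0) => // l _.

    rewrite eqV t'z mulmx0 add0r ae scale1r; apply: sub; right; by exists jr.
  + have ha : 0 < 1 - a by rewrite subr_gt0 lt_neqAle an1 a1.
    pose t'' := (1 - a)^-1 *: t'.
    have C1 : C (V *m t'').
      apply: IH.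
      * split.
        -- move=> i; rewrite mxE; apply: mulr_ge0 => //.
           by rewrite invr_ge0 ltW.
        -- under eq_bigr => i _ do rewrite mxE.
           rewrite -mulr_sumr st' ler_pdivrMl // mulr1 lerBlDr -lerBlDl.
           by move: ts; lra.
      * by move=> j rj; rewrite mxE supp' // mulr0.
    have C2 : C (col jr V) by apply: sub; right; exists jr.
    have := cC _ _ a C1 C2 a0 a1.
    rewrite /t'' -scalemxAr scalerA divff ?scale1r -?eqV //.
    by rewrite gt_eqF.
Qed.

Lemma compact_coord_bound (R : realType) (n : nat) (K : set 'cV[R]_n) (i : 'I_n) :
  compact K -> exists M : R, forall x, K x -> `|x i 0| <= M.
Proof.
move=> cK.
have : compact ((fun x : 'cV[R]_n => x i 0) @` K).
  apply: continuous_compact => //.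
  by apply: continuous_subspaceT => x; apply: coord_continuous.
move=> /compact_bounded [M [_ HM]].
exists (M + 1) => x Kx.
by have := HM (M + 1) ltac:(by rewrite ltrDl) (x i 0) (ex_intro2 _ _ x Kx erefl).
Qed.

Section Gen.
Variable R : realType.

Lemma lin_image_simS n k (phi : 'M[R]_n) (V : 'M[R]_(n,k)) :
  lin_image phi (simS V) = simS (phi *m V).
Proof.
apply/seteqP; split.
- by move=> _ [_ [t Dt <-] <-]; exists t => //; rewrite mulmxA.
- by move=> _ [t Dt <-]; exists (V *m t); [exists t | rewrite mulmxA].
Qed.

Lemma simplex_simS n k (V : 'M[R]_(n,k)) (B : 'M[R]_(k,n)) :
  B *m V = 1%:M -> simplex_o (simS V).
Proof.
move=> hB; exists k, V; split; last by rewrite conv_simS.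
by apply/row_freeP; exists B^T; rewrite -trmx_mul hB trmx1.
Qed.

Lemma simplexP n (T : set 'cV[R]_n) : simplex_o T ->
  exists k (V : 'M[R]_(n,k)), row_free V^T /\ T = simS V.
Proof. by move=> [k [V [rf ->]]]; exists k, V; rewrite conv_simS. Qed.

Lemma left_inv n k (V : 'M[R]_(n,k)) : row_free V^T -> exists B, B *m V = 1%:M.
Proof.
move/row_freeP => [C hC]; exists C^T.
by rewrite -[V]trmxK -trmx_mul hC trmx1.
Qed.

Lemma simplex_lin n (phi : 'M[R]_n) T : phi \in unitmx -> simplex_o T ->
  simplex_o (lin_image phi T).
Proof.
move=> u /simplexP [k [V [rf ->]]]; rewrite lin_image_simS.
have [B hB] := left_inv rf.
apply: (@simplex_simS _ _ _ (B *m invmx phi)).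
by rewrite -mulmxA (mulmxA (invmx phi)) mulVmx // mul1mx.
Qed.

Lemma invmx_eq n (A B : 'M[R]_n) : A *m B = 1%:M -> invmx A = B.
Proof.
move=> h; have [uA _] := mulmx1_unit h.
by rewrite -[RHS](mulKmx uA) h mulmx1.
Qed.

Lemma invar n (Z : set 'cV[R]_n -> set 'cV[R]_n) T (phi : 'M[R]_n) :
  SL_contravariant Z -> simplex_o T -> \det phi = 1 -> lin_image phi T = T ->
  forall x, Z T x -> Z T ((invmx phi)^T *m x).
Proof.
move=> HSL sT d1 eT x Zx.
have E := HSL T phi sT d1; rewrite eT in E.
by rewrite E; exists x.
Qed.

Lemma bound_zero n (K : set 'cV[R]_n) (i : 'I_n) (c : R) : compact K ->
  (c != 0 -> forall N : nat, exists y, K y /\ N%:R * `|c| <= `|y i 0|) -> c = 0.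
Proof.
move=> cK H; apply/eqP; apply/negP => /negP cn0.
have [M HM] := compact_coord_bound i cK.
have c0 : 0 < `|c| by rewrite normr_gt0.
have M0 : 0 <= `|M| / `|c| by rewrite divr_ge0.
have [y [Ky hy]] := H cn0 (Num.Def.archi_bound (`|M| / `|c|)).
have := archi_boundP M0; rewrite ltr_pdivrMr // => h.
have := le_trans hy (HM y Ky) => h2.
have : `|M| < `|M| by apply: (lt_le_trans h); apply: le_trans h2 _; exact: ler_norm.
by rewrite ltxx.
Qed.

Lemma delta_mul_entry p k (a : 'I_p) (b : 'I_k) (y : 'cV[R]_k) :
  (delta_mx a b *m y) a 0 = y b 0.
Proof.
rewrite mxE (bigD1 b) //= big1 ?addr0; first by rewrite mxE !eqxx mul1r.
by move=> l /negbTE lb; rewrite mxE lb andbF mul0r.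
Qed.

Lemma sum_col_mx k1 k2 (a : 'cV[R]_k1) (b : 'cV[R]_k2) :
  \sum_i (col_mx a b) i 0 = \sum_i a i 0 + \sum_i b i 0.
Proof.
rewrite big_split_ord /=; congr (_ + _); apply: eq_bigr => i _;
  by rewrite ?col_mxEu ?col_mxEd.
Qed.

End Gen.

Section Std.
Variable R : realType.
Variables k m : nat.
Definition Estd : 'M[R]_(k + m, k) := col_mx 1%:M 0.
Definition Std := simS Estd.

Lemma simplex_Std : simplex_o Std.
Proof.
apply: (@simplex_simS _ _ _ _ (row_mx 1%:M 0)).
by rewrite /Estd mul_row_col mul1mx mul0mx addr0.
Qed.

Lemma fix_Std (phi : 'M[R]_(k + m)) : phi *m Estd = Estd -> lin_image phi Std = Std.
Proof. by move=> h; rewrite /Std lin_image_simS h. Qed.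

Variable Z : set 'cV[R]_(k + m) -> set 'cV[R]_(k + m).
Hypothesis HK : maps_To_Ko Z.
Hypothesis HSL : SL_contravariant Z.

Lemma compact_ZStd : compact (Z Std).
Proof. by have [] := HK simplex_Std. Qed.

Lemma Y_lemma : (0 < m)%N -> forall x, Z Std x -> usubmx x = 0.
Proof.
move=> m0 x Zx; apply/matrixP => i j; rewrite ord1 [RHS]mxE.
pose j0 : 'I_m := Ordinal m0.
pose y := usubmx x; pose z := dsubmx x.
apply: (@bound_zero R _ _ (rshift k j0) _ compact_ZStd) => yn0 N.
pose s := (N%:R * `|y i 0| + `|z j0 0|) / y i 0.
pose B : 'M[R]_(k, m) := - (s *: delta_mx i j0).
pose phi : 'M[R]_(k + m) := block_mx 1%:M B 0 1%:M.
have d1 : \det phi = 1 by rewrite det_ublock !det1 mulr1.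
have fx : phi *m Estd = Estd.
  by rewrite /Estd mul_block_col !mul1mx !mulmx0 !mul0mx !addr0.
have inv : invmx phi = block_mx 1%:M (-B) 0 1%:M.
  apply: invmx_eq; rewrite mulmx_block !mul1mx !mulmx1 !mul0mx mulmx0 !addr0.
  by rewrite add0r addNr -scalar_mx_block.
have Zw := invar HSL simplex_Std d1 (fix_Std fx) Zx.
rewrite inv tr_block_mx !trmx1 trmx0 -[x]vsubmxK mul_block_col in Zw.
rewrite !mul1mx mul0mx addr0 in Zw.
exists (col_mx y ((- B)^T *m y + z)); split => //.
rewrite col_mxEd [X in _ <= `|X|]mxE /B opprK linearZ /= trmx_delta -scalemxAl.
have e : s * y i 0 = N%:R * `|y i 0| + `|z j0 0| by rewrite /s divfK.
rewrite [X in _ <= `|X + _|]mxE delta_mul_entry.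
rewrite e; apply: le_trans (ler_norm _).
rewrite -addrA lerDl.
by have := ler_norm (- z j0 0); rewrite normrN; lra.
Qed.

Lemma M2_lemma : (1 < m)%N -> forall x, Z Std x -> x = 0.
Proof.
move=> m1 x Zx.
have u := Y_lemma (ltnW m1) Zx.
rewrite -[x]vsubmxK u; suff -> : dsubmx x = 0 by rewrite col_mx0.
apply/matrixP => j i; rewrite ord1 [RHS]mxE.
pose z := dsubmx x.
have [j' njj'] : exists j' : 'I_m, j' != j.
  have h : ((if (j:nat) == 0%N then 1 else 0) < m)%N by case: ifP => _ //; apply: ltnW.
  exists (Ordinal h); apply/eqP => /(congr1 val) /=.
  by case: ifP => [/eqP -> //|/eqP ne e]; apply: ne.
apply: (@bound_zero R _ _ (rshift k j) _ compact_ZStd) => zn0 N.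
pose s : R := N.+1%:R.
have s0 : s != 0 by rewrite pnatr_eq0.
pose d : 'rV[R]_m := \row_l (if l == j then s^-1 else if l == j' then s else 1).
pose d' : 'rV[R]_m := \row_l (if l == j then s else if l == j' then s^-1 else 1).
pose phi : 'M[R]_(k + m) := block_mx 1%:M 0 0 (diag_mx d).
have d1 : \det phi = 1.
  rewrite det_ublock det1 mul1r det_diag (bigD1 j) //= (bigD1 j') //= big1.
    by rewrite !mxE eqxx (negbTE njj') eqxx mulr1 mulVf.
  by move=> l /andP [lj lj']; rewrite mxE (negbTE lj) (negbTE lj').
have fx : phi *m Estd = Estd.
  by rewrite /Estd mul_block_col !mul1mx !mulmx0 !mul0mx !addr0.
have inv : invmx phi = block_mx 1%:M 0 0 (diag_mx d').
  apply: invmx_eq; rewrite mulmx_block !mul1mx !mulmx1 !mul0mx ?mulmx0 !addr0 ?add0r.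
  have -> : diag_mx d *m diag_mx d' = 1%:M.
    rewrite mulmx_diag; apply/matrixP => a b; rewrite !mxE.
    case: (a =P j) => [->|_]; first by rewrite mulVf.
    case: (a =P j') => [->|_]; first by rewrite mulfV.
    by rewrite mulr1.
  by rewrite -scalar_mx_block.
have Zw := invar HSL simplex_Std d1 (fix_Std fx) Zx.
rewrite inv tr_block_mx !trmx1 !trmx0 tr_diag_mx -[x]vsubmxK u mul_block_col in Zw.
rewrite !mul1mx ?mul0mx ?mulmx0 ?addr0 ?add0r in Zw.
exists (col_mx 0 (diag_mx d' *m z)); split => //.
rewrite col_mxEd mul_diag_mx [X in _ <= `|X|]mxE [X in _ <= `|X * _|]mxE eqxx.
rewrite normrM ger0_norm ?ler0n // ler_wpM2r ?normr_ge0 // ler_nat.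
by [].
Qed.
End Std.

Lemma reduce (R : realType) k m (V : 'M[R]_(k + m, k)) : (0 < m)%N -> row_free V^T ->
  exists phi : 'M[R]_(k + m), \det phi = 1 /\ phi *m V = Estd R k m.
Proof.
move=> m0 rf.
have rk : \rank V^T = k by apply/eqP.
have eA := mulmx_ebase V^T; rewrite rk pid_mx_row in eA.
set L := col_ebase V^T in eA; set U := row_ebase V^T in eA.
pose G : 'M[R]_(k + m) := block_mx L 0 0 1%:M.
have hG : L *m row_mx 1%:M 0 = row_mx 1%:M 0 *m G.
  by rewrite mul_mx_row mulmx1 mulmx0 mul_row_block !mul1mx !mul0mx ?mulmx0 !addr0.
pose W := U^T *m G^T.
have eV : V = W *m Estd R k m.
  by rewrite -[V]trmxK -eA hG /W /Estd !trmx_mul tr_row_mx trmx1 trmx0 mulmxA.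
have uG : G \in unitmx.
  by rewrite unitmxE det_ublock det1 mulr1 -unitmxE col_ebase_unit.
have uW : W \in unitmx by rewrite unitmx_mul !unitmx_tr uG row_ebase_unit.
pose phi0 := invmx W.
have h0 : phi0 *m V = Estd R k m by rewrite eV mulKmx.
pose d := \det phi0.
have dn0 : d != 0 by rewrite -unitfE -unitmxE unitmx_inv.
pose j0 : 'I_m := Ordinal m0.
pose D : 'M[R]_(k + m) :=
  block_mx 1%:M 0 0 (diag_mx (\row_l (if l == j0 then d^-1 else 1))).
exists (D *m phi0); split.
- rewrite det_mulmx det_ublock det1 mul1r det_diag (bigD1 j0) //= big1.
    by rewrite mxE eqxx mulr1 mulVf.
  by move=> l lj; rewrite mxE (negbTE lj).
- by rewrite -mulmxA h0 /Estd mul_block_col !mul1mx !mulmx0 !mul0mx !addr0.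
Qed.

Section Bm.
Variable R : realType.
Variable k : nat.
Variables a b : 'I_k.
Hypothesis ab : a != b.

Definition Bm : 'M[R]_k := 1%:M + 2^-1 *: (delta_mx a b - delta_mx b b).

Lemma Bm_ij i j : Bm i j = (i == j)%:R + 2^-1 * ((i == a) && (j == b))%:R
   - 2^-1 * ((i == b) && (j == b))%:R.
Proof. by rewrite !mxE mulrBr addrA. Qed.

Lemma Bm_entry (t : 'cV[R]_k) i :
  (Bm *m t) i 0 = t i 0 + t b 0 / 2 * ((i == a)%:R - (i == b)%:R).
Proof.
rewrite mulmxDl mul1mx -scalemxAl mulmxBl !mxE.
rewrite (bigD1 b) //= big1 ?addr0; last by move=> l /negbTE lb; rewrite mxE lb andbF mul0r.
rewrite (bigD1 b) //= big1 ?addr0; last by move=> l /negbTE lb; rewrite mxE lb andbF mul0r.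
rewrite !mxE !eqxx !andbT; case: (i == a); case: (i == b) => /=; lra.
Qed.

Lemma sum_ind (c : 'I_k) : \sum_i ((i == c)%:R : R) = 1.
Proof. by rewrite (bigD1 c) //= big1 ?eqxx ?addr0 // => i /negbTE ->. Qed.

Lemma Bm_sum (t : 'cV[R]_k) : \sum_i (Bm *m t) i 0 = \sum_i t i 0.
Proof.
under eq_bigr => i _ do rewrite Bm_entry.
by rewrite big_split /= -mulr_sumr sumrB !sum_ind subrr mulr0 addr0.
Qed.

Lemma Bm_Delta (t : 'cV[R]_k) : Delta t -> Delta (Bm *m t) /\
   (Bm *m t) b 0 <= (Bm *m t) a 0.
Proof.
move=> [t0 ts]; split; [split|].
- move=> i; rewrite Bm_entry; have := t0 i; have := t0 b.
  case: (eqVneq i a) => [->|ia]; first by rewrite ?eqxx (negbTE ab) /=; lra.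
  case: (eqVneq i b) => [->|ib]; first by rewrite ?eqxx /=; lra.
  by rewrite ?(negbTE ia) ?(negbTE ib) /=; lra.
- by rewrite Bm_sum.
- rewrite !Bm_entry eqxx (negbTE ab) eq_sym (negbTE ab) eqxx.
  rewrite /=; have := t0 a; have := t0 b; lra.
Qed.

Lemma Bm_onto (s : 'cV[R]_k) : Delta s -> s b 0 <= s a 0 ->
  exists t, Delta t /\ Bm *m t = s.
Proof.
move=> [s0 ss] hab.
pose t : 'cV[R]_k := s + s b 0 *: (delta_mx b 0 - delta_mx a 0).
have te i : t i 0 = s i 0 + s b 0 * ((i == b)%:R - (i == a)%:R).
  by rewrite !mxE !eqxx !andbT.
exists t; split; [split|].
- move=> i; rewrite te; have := s0 i; have := s0 b.
  case: (eqVneq i a) => [->|ia]; first by rewrite ?eqxx (negbTE ab) /=; lra.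
  case: (eqVneq i b) => [->|ib]; first by rewrite ?eqxx /=; lra.
  by rewrite ?(negbTE ia) ?(negbTE ib) /=; lra.
- under eq_bigr => i _ do rewrite te.
  by rewrite big_split /= -mulr_sumr sumrB !sum_ind subrr mulr0 addr0.
- apply/matrixP => i j; rewrite ord1 Bm_entry !te !eqxx ?(negbTE ab) ?(eq_sym b a) ?(negbTE ab) /=.
  case: (i == a); case: (i == b); lra.
Qed.

Lemma Bm_eq (t : 'cV[R]_k) : (Bm *m t) a 0 = (Bm *m t) b 0 -> t a 0 = 0.
Proof.
rewrite !Bm_entry eqxx (negbTE ab) eq_sym (negbTE ab) eqxx /=; lra.
Qed.

Lemma det_Bm : \det Bm = 2^-1.
Proof.
have diag : \prod_i Bm i i = 2^-1.
  rewrite (bigD1 b) //= big1 ?mulr1.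
    by rewrite Bm_ij !eqxx (eq_sym b a) (negbTE ab) /=; lra.
  move=> i /negbTE ib; rewrite Bm_ij eqxx ib !andbF /=; lra.
have off i j : i != j -> ~~ ((i == a) && (j == b)) -> Bm i j = 0.
  move=> nij nab; rewrite Bm_ij (negbTE nij) (negbTE nab).
  have -> : (i == b) && (j == b) = false.
    by apply/negbTE; apply: contra nij => /andP [/eqP -> /eqP ->].
  by rewrite /=; lra.
case: (ltngtP a b) => [lab|lba|eab].
- rewrite -det_tr det_trig.
    by rewrite -diag; apply: eq_bigr => i _; rewrite mxE.
  apply/is_trig_mxP => i j lij; rewrite mxE off //.
    by rewrite neq_ltn lij orbT.
  apply/negP => /andP [/eqP ja /eqP ib]; move: lij; rewrite ja ib ltnNge.
  by rewrite (ltnW lab).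
- rewrite det_trig //.
  apply/is_trig_mxP => i j lij; rewrite off //.
    by rewrite neq_ltn lij.
  apply/negP => /andP [/eqP ia /eqP jb]; move: lij; rewrite ia jb ltnNge.
  by rewrite (ltnW lba).
- by exfalso; move/negP: ab; apply; apply/eqP/val_inj.
Qed.

End Bm.

Section Hard.
Variable R : realType.
Variable p : nat.
Let i0 : 'I_(p.+2) := ord0.
Let i1 : 'I_(p.+2) := Ordinal (isT : (1 < p.+2)%N).
Lemma i01 : i0 != i1. Proof. by []. Qed.
Let B1 : 'M[R]_(p.+2) := Bm R i0 i1.
Let B2 : 'M[R]_(p.+2) := Bm R i1 i0.
Let E := Estd R p.+2 1.
Let J : 'M[R]_(1 + p.+1, p.+1) := col_mx 0 1%:M.
Definition phiB (B : 'M[R]_(p.+2)) : 'M[R]_(p.+2 + 1) := block_mx B 0 0 (2%:M).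

Lemma Ecol (w : 'cV[R]_(p.+2)) : E *m w = col_mx w 0.
Proof. by rewrite /E /Estd mul_col_mx mul1mx mul0mx. Qed.

Lemma phiB_E B : phiB B *m E = E *m B.
Proof.
by rewrite /phiB /E /Estd mul_block_col mul_col_mx ?mulmx1 ?mulmx0 ?mul0mx ?mul1mx ?addr0.
Qed.

Lemma det_phiB (a b : 'I_(p.+2)) : a != b -> \det (phiB (Bm R a b)) = 1.
Proof.
move=> ab; by rewrite /phiB det_ublock det_Bm // det_scalar expr1 mulVf //.
Qed.

Lemma unit_phiB (a b : 'I_(p.+2)) : a != b -> phiB (Bm R a b) \in unitmx.
Proof. by move=> ab; rewrite unitmxE det_phiB // unitr1. Qed.

Lemma psi_phiB (a b : 'I_(p.+2)) (z : 'cV[R]_1) : a != b ->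
  (invmx (phiB (Bm R a b)))^T *m col_mx 0 z = col_mx 0 (2^-1 *: z).
Proof.
move=> ab.
have e : (phiB (Bm R a b))^T *m col_mx 0 (2^-1 *: z) = col_mx 0 z.
  rewrite /phiB tr_block_mx !trmx0 tr_scalar_mx mul_block_col !mulmx0 !mul0mx.
  by rewrite !addr0 add0r mul_scalar_mx scalerA divff ?scale1r // pnatr_eq0.
by rewrite -e trmx_inv mulKmx // unitmx_tr unit_phiB.
Qed.

Lemma Std_mem (x : 'cV[R]_(p.+2 + 1)) :
  @Std R p.+2 1 x <-> exists2 t, Delta t & x = col_mx t 0.
Proof.
split; first by move=> [t Dt <-]; exists t => //; rewrite Ecol.
by move=> [t Dt ->]; exists t => //; rewrite Ecol.
Qed.

Lemma img_mem (a b : 'I_(p.+2)) (x : 'cV[R]_(p.+2 + 1)) :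
  lin_image (phiB (Bm R a b)) (@Std R p.+2 1) x <->
  exists2 t, Delta t & x = col_mx (Bm R a b *m t) 0.
Proof.
split.
- move=> [_ [t Dt <-] <-]; exists t => //.
  by rewrite mulmxA phiB_E -mulmxA Ecol.
- move=> [t Dt ->]; exists (E *m t); first by exists t.
  by rewrite mulmxA phiB_E -mulmxA Ecol.
Qed.

Lemma i10 : i1 != i0. Proof. by []. Qed.

Lemma U_eq : lin_image (phiB B1) (@Std R p.+2 1) `|` lin_image (phiB B2) (@Std R p.+2 1)
  = @Std R p.+2 1.
Proof.
apply/seteqP; split.
- move=> x [/img_mem [t Dt ->]|/img_mem [t Dt ->]]; apply/Std_mem.
  + by exists (B1 *m t) => //; have [] := Bm_Delta i01 Dt.
  + by exists (B2 *m t) => //; have [] := Bm_Delta i10 Dt.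
- move=> x /Std_mem [s Ds ->].
  case: (leP (s i1 0) (s i0 0)) => h.
  + left; apply/img_mem; have [t [Dt <-]] := Bm_onto i01 Ds h; by exists t.
  + right; apply/img_mem; have [t [Dt <-]] := Bm_onto i10 Ds (ltW h); by exists t.
Qed.

Let V12 : 'M[R]_(p.+2 + 1, p.+1) := col_mx (B1 *m J) 0.

Lemma J_i0 (u : 'cV[R]_(p.+1)) : (J *m u) i0 0 = 0.
Proof.
rewrite /J mul_col_mx mul0mx mul1mx.
have -> : i0 = lshift p.+1 (ord0 : 'I_1) by apply: val_inj.
by rewrite col_mxEu mxE.
Qed.

Lemma J_Delta (u : 'cV[R]_(p.+1)) : Delta u -> Delta (J *m u).
Proof.
move=> [u0 us]; rewrite /J mul_col_mx mul0mx mul1mx; split.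
- move=> i; rewrite -(@splitK 1 p.+1 i); case: (fintype.split i) => j /=.
  + by rewrite col_mxEu mxE.
  + by rewrite col_mxEd.
- by rewrite sum_col_mx big1 ?add0r // => i _; rewrite mxE.
Qed.

Lemma I_eq : lin_image (phiB B1) (@Std R p.+2 1) `&` lin_image (phiB B2) (@Std R p.+2 1)
  = simS V12.
Proof.
apply/seteqP; split.
- move=> x [/img_mem [t Dt ->] /img_mem [t' Dt' e]].
  have [e1 _] := eq_col_mx e.
  have [_ h1] := Bm_Delta i01 Dt.
  have [_ h2] := Bm_Delta i10 Dt'.
  rewrite -e1 in h2.
  have t0 : t i0 0 = 0 by apply: (Bm_eq i01); apply/le_anti; rewrite h1 h2.
  have eT : t = J *m dsubmx (t : 'cV_(1 + p.+1)).
    rewrite /J mul_col_mx mul0mx mul1mx.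
    apply/matrixP => i j; rewrite !ord1.
    move: i; change (forall i : 'I_(1 + p.+1), t i 0 = col_mx 0 (dsubmx (t : 'cV_(1 + p.+1))) i 0) => i.
    rewrite -(@splitK 1 p.+1 i); case: (fintype.split i) => l /=.
    + rewrite col_mxEu mxE -t0; congr (t _ _); apply: val_inj => /=.
      by rewrite ord1.
    + by rewrite col_mxEd mxE.
  exists (dsubmx (t : 'cV_(1 + p.+1))).
  + case: Dt => [tp ts]; split; first by move=> i; rewrite mxE.
    apply: le_trans ts; rewrite [X in _ <= X]big_ord_recl.
    have -> : t ord0 0 = 0 by exact: t0.
    rewrite add0r le_eqVlt; apply/orP; left; apply/eqP; apply: eq_bigr => j _.
    by rewrite mxE; congr (t _ _); apply: val_inj.
  + by rewrite /V12 mul_col_mx mul0mx -mulmxA -eT.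
- move=> _ [u Du <-].
  have Dt := J_Delta Du.
  split; apply/img_mem.
  + by exists (J *m u) => //; rewrite /V12 mul_col_mx mul0mx mulmxA.
  + have [Ds _] := Bm_Delta i01 Dt.
    have h : (B1 *m (J *m u)) i0 0 <= (B1 *m (J *m u)) i1 0.
      rewrite !Bm_entry J_i0 /=; lra.
    have [t' [Dt' et']] := Bm_onto i10 Ds h.
    by exists t' => //; rewrite et' /V12 mul_col_mx mul0mx mulmxA.
Qed.

Lemma simplex_I : simplex_o (lin_image (phiB B1) (@Std R p.+2 1) `&`
   lin_image (phiB B2) (@Std R p.+2 1)).
Proof.
rewrite I_eq; apply: (@simplex_simS _ _ _ _ (row_mx (J^T *m invmx B1) 0)).
have uB : B1 \in unitmx.
  by rewrite unitmxE det_Bm // unitfE invr_eq0 pnatr_eq0.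
rewrite /V12 mul_row_col mul0mx addr0 -mulmxA (mulmxA (invmx B1)) mulVmx //.
by rewrite mul1mx /J tr_col_mx mul_row_col mulmx0 add0r trmx1 mulmx1.
Qed.

Lemma hard_std (Z : set 'cV[R]_(p.+2 + 1) -> set 'cV[R]_(p.+2 + 1)) :
  maps_To_Ko Z -> Linf_valuation Z -> SL_contravariant Z ->
  Z (@Std R p.+2 1) = [set 0].
Proof.
move=> HK HV HSL.
set S := @Std R p.+2 1.
have sS : simplex_o S := @simplex_Std R p.+2 1.
have [cS [cvS S0]] := HK S sS.
have colz : forall y, Z S y -> y = col_mx 0 (dsubmx y).
  move=> y Zy; have u := @Y_lemma R p.+2 1 Z HK HSL isT y Zy.
  by rewrite -{1}[y]vsubmxK u.
have half : forall a b : 'I_(p.+2), a != b -> forall y,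
    Z (lin_image (phiB (Bm R a b)) S) y -> exists2 w, Z S w & 2^-1 *: w = y.
  move=> a b ab y; rewrite (HSL S _ sS (det_phiB ab)) => -[w Zw <-].
  exists w => //; rewrite (colz w Zw) psi_phiB // scale_col_mx scaler0.
  by congr col_mx; rewrite -(colz w Zw).

have sT1 := simplex_lin (unit_phiB i01) sS.
have sT2 := simplex_lin (unit_phiB i10) sS.
have sU : simplex_o (lin_image (phiB B1) S `|` lin_image (phiB B2) S).
  by rewrite U_eq.
have HV' := HV _ _ sT1 sT2 sU simplex_I.
have dbl : forall x, Z S x -> Z S (2 *: x).
  move=> x Zx.
  have : linf_add (Z (lin_image (phiB B1) S `|` lin_image (phiB B2) S))
     (Z (lin_image (phiB B1) S `&` lin_image (phiB B2) S)) x.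
    by rewrite U_eq => C _ sub; apply: sub; left.
  rewrite HV' => /(_ [set 2^-1 *: w | w in Z S]) [].
  - move=> _ _ t [w1 Z1 <-] [w2 Z2 <-] t0 t1.
    exists ((1 - t) *: w1 + t *: w2); first exact: cvS.
    by rewrite scalerDr !scalerA mulrC (mulrC t).
  - by move=> y [Zy|Zy]; [apply: (half _ _ i01) | apply: (half _ _ i10)].
  - move=> w Zw <-; rewrite scalerA mulfV ?scale1r // pnatr_eq0.
have pw : forall N x, Z S x -> Z S (2^+N *: x).
  elim=> [|N IH] x Zx; first by rewrite expr0 scale1r.
  by rewrite exprS -scalerA; apply: dbl; apply: IH.
apply/seteqP; split; last by move=> _ ->.
move=> x Zx; apply/matrixP => i j; rewrite ord1 [RHS]mxE.
apply: (@bound_zero R _ _ i _ cS) => _ N.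
exists (2^+N *: x); split; first exact: pw.
rewrite mxE normrM ler_wpM2r ?normr_ge0 // ger0_norm ?exprn_ge0 //.
by rewrite -natrX ler_nat ltnW // ltn_expl.
Qed.
End Hard.

Lemma main_km (R : realType) k m (Z : set 'cV[R]_(k + m) -> set 'cV[R]_(k + m))
  (V : 'M[R]_(k + m, k)) : (0 < m)%N -> (3 <= k + m)%N ->
  maps_To_Ko Z -> Linf_valuation Z -> SL_contravariant Z -> row_free V^T ->
  Z (simS V) = [set 0].
Proof.
move=> m0 hn HK HV HSL rf.
have stdZ : Z (@Std R k m) = [set 0].
  case: (ltnP 1 m) => [m2|m1].
  - apply/seteqP; split; first by move=> x Zx; exact: (M2_lemma HK HSL m2 Zx).
    by move=> _ ->; have [_ [_ h]] := HK _ (@simplex_Std R k m).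
  - have em : m = 1%N by apply/eqP; rewrite eqn_leq m1 m0.
    subst m.
    have [p ek] : exists p, k = p.+2.
      by exists k.-2; move: hn; rewrite addn1 ltnS => hn; rewrite -subn2 -addn2 subnK.
    subst k; exact: hard_std.
have [phi [d1 hphi]] := reduce m0 rf.
have sV : simplex_o (simS V) by have [B hB] := left_inv rf; exact: simplex_simS hB.
have E := HSL (simS V) phi sV d1.
rewrite lin_image_simS hphi in E.
have uphi : phi \in unitmx by rewrite unitmxE d1 unitr1.
apply/seteqP; split; last by move=> _ ->; have [_ [_ h]] := HK _ sV.
move=> x Zx.
have : Z (@Std R k m) ((invmx phi)^T *m x) by rewrite /Std E; exists x.
rewrite stdZ /= => hx.
have upsi : (invmx phi)^T \in unitmx by rewrite unitmx_tr unitmx_inv.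
by rewrite -(mulKmx upsi x) hx mulmx0.
Qed.

Unset Implicit Arguments.

Theorem lemma3p1 (R : realType) (n : nat) (Z : set 'cV[R]_n -> set 'cV[R]_n) :
  (3 <= n)%N ->
  maps_To_Ko Z -> Linf_valuation Z -> SL_contravariant Z ->
  forall T, simplex_o T -> ~ affdim_ge T n -> Z T = [set 0].
Proof.
move=> hn HK HV HSL T sT naff.
have [k [V [rf eT]]] := simplexP sT.
rewrite eT in naff *.
have kn : (k <= n)%N.
  by have := rank_leq_col V^T; rewrite (eqP rf).
have kn' : k != n.
  apply/eqP => ekn; subst k; apply: naff; exists 0, V; split.
    by exists 0; [apply: Delta0 | rewrite mulmx0].
  split => // j; exists (delta_mx j 0); last by rewrite add0r colE.
  split; last by rewrite sum_delta.
  by move=> i; rewrite mxE ler0n.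
have [m em] : exists m, n = (k + m)%N by exists (n - k)%N; rewrite subnKC.
subst n.
apply: main_km => //.
by rewrite lt0n; apply: contra kn' => /eqP ->; rewrite addn0.
Qed.
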